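(* There is an absolute constant $C>0$ such that for all $k\ge 2$, $\gamma\in(0,1]$, $\varepsilon\in(0,1]$ and $n\ge C\,k^3/(\gamma^2\varepsilon^4)$, there exists a symmetric private-coin $\varepsilon$-LDP protocol with $n$ users, each holding an i.i.d. sample from an unknown $p\in\Delta([k]\times[k])$, whose curator outputs ``independent'' with probability at least $2/3$ if $p$ is a product distribution and ``not independent'' with probability at least $2/3$ if $p$ is $\gamma$-far from every product distribution.
   Context: $\Delta(\Omega)$ is the set of probability distributions on a finite set $\Omega$; $d_{TV}(p,q)=\frac12\|p-q\|_1$. A distribution on $[k]\times[k]$ is a product distribution if it equals $p_1\otimes p_2$, $(p_1\otimes p_2)(x_1,x_2)=p_1(x_1)p_2(x_2)$, for some $p_1,p_2\in\Delta([k])$; $p$ is $\gamma$-far from product if $d_{TV}(p,q)>\gamma$ for every product distribution $q$. Protocol model: user $j$ holds $X_j$, $X_1,\dots,X_n$ i.i.d. from $p$; each user sends $Z_j\sim W(\cdot\mid X_j)$ for a channel $W$ into a finite set, independently across users (private-coin, symmetric: the same $W$ for all users), and the curator outputs a possibly randomized function of $(Z_1,\dots,Z_n)$. $\varepsilon$-LDP means $W(z\mid x)\le e^\varepsilon W(z\mid x')$ for all $z,x,x'$. *)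

(* Defs.v *)
From mathcomp Require Import all_boot.
From Stdlib Require Import Reals.

Set Implicit Arguments. Unset Strict Implicit. Unset Printing Implicit Defensive.
Open Scope R_scope.

Definition rsum (T : finType) (f : T -> R) : R := \big[Rplus/R0]_(t : T) f t.
Definition rprod (n : nat) (f : 'I_n -> R) : R := \big[Rmult/R1]_(j < n) f j.

Definition is_distr (T : finType) (p : T -> R) : Prop :=
  (forall t, 0 <= p t) /\ rsum p = 1.

Definition dTV (T : finType) (p q : T -> R) : R :=
  / 2 * rsum (fun t => Rabs (p t - q t)).

Definition pair_dom (k : nat) : finType := ('I_k * 'I_k)%type.

Definition is_product (k : nat) (p : pair_dom k -> R) : Prop :=
  exists p1 p2 : 'I_k -> R, is_distr p1 /\ is_distr p2 /\
    forall x : pair_dom k, p x = p1 x.1 * p2 x.2.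

Definition far_from_product (k : nat) (gamma : R) (p : pair_dom k -> R) : Prop :=
  forall q : pair_dom k -> R, is_distr q -> is_product q -> dTV p q > gamma.

Definition is_channel (X Z : finType) (W : X -> Z -> R) : Prop :=
  (forall x z, 0 <= W x z) /\ (forall x, rsum (W x) = 1).

Definition is_LDP (X Z : finType) (eps : R) (W : X -> Z -> R) : Prop :=
  forall z x x', W x z <= exp eps * W x' z.

(* Probability that the curator outputs "independent": users j < n hold
   i.i.d. X_j ~ p, send Z_j ~ W(.|X_j) independently; the (randomized)
   curator, given messages z, outputs "independent" with probability A z
   and "not independent" with probability 1 - A z. *)
Definition prob_indep (X Z : finType) (n : nat) (p : X -> R) (W : X -> Z -> R)
  (A : {ffun 'I_n -> Z} -> R) : R :=
  rsum (fun z : {ffun 'I_n -> Z} =>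
          rprod (fun j : 'I_n => rsum (fun x => p x * W x (z j))) * A z).

(* Main.v *)
Require Import Defs.
From HB Require Import structures.
From mathcomp Require Import all_boot zify.
From Stdlib Require Import Reals Lra.
Open Scope R_scope.
Set Implicit Arguments. Unset Strict Implicit. Unset Printing Implicit Defensive.

HB.instance Definition _ := Monoid.isComLaw.Build R R0 Rplus (fun a b c => esym (Rplus_assoc a b c)) Rplus_comm Rplus_0_l.
HB.instance Definition _ := Monoid.isComLaw.Build R R1 Rmult (fun a b c => esym (Rmult_assoc a b c)) Rmult_comm Rmult_1_l.
HB.instance Definition _ := Monoid.isMulLaw.Build R R0 Rmult Rmult_0_l Rmult_0_r.
HB.instance Definition _ := Monoid.isAddLaw.Build R Rmult Rplus Rmult_plus_distr_r Rmult_plus_distr_l.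

Lemma rsum_le (T : finType) (P : pred T) (f g : T -> R) :
  (forall t, P t -> f t <= g t) ->
  \big[Rplus/R0]_(t | P t) f t <= \big[Rplus/R0]_(t | P t) g t.
Proof.
move=> H; apply: (big_ind2 (fun a b => a <= b)) => //; [lra | move=> *; lra].
Qed.

Lemma rsum_ge0 (T : finType) (P : pred T) (f : T -> R) :
  (forall t, P t -> 0 <= f t) -> 0 <= \big[Rplus/R0]_(t | P t) f t.
Proof.
move=> H; apply: (big_ind (fun a => 0 <= a)) => //; [lra | move=> *; lra].
Qed.

Lemma rprod_ge0 (T : finType) (P : pred T) (f : T -> R) :
  (forall t, P t -> 0 <= f t) -> 0 <= \big[Rmult/R1]_(t | P t) f t.
Proof.
move=> H; apply: (big_ind (fun a => 0 <= a)) => //; [lra | move=> *; nra].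
Qed.

Lemma rsum_pred1 (T : finType) (y : T) (F : T -> R) :
  \big[Rplus/R0]_(x : T) (if y == x then F x else 0) = F y.
Proof.
rewrite (bigD1 y) //= eqxx big1 ?Rplus_0_r // => x /negbTE.
by rewrite eq_sym => ->.
Qed.

Lemma sumZl (T : finType) (P : pred T) (c : R) (F : T -> R) :
  \big[Rplus/R0]_(t | P t) (c * F t) = c * \big[Rplus/R0]_(t | P t) F t.
Proof. by rewrite big_distrr. Qed.

Lemma sumZr (T : finType) (P : pred T) (c : R) (F : T -> R) :
  \big[Rplus/R0]_(t | P t) (F t * c) = \big[Rplus/R0]_(t | P t) F t * c.
Proof. by rewrite big_distrl. Qed.

Lemma sumN (T : finType) (F : T -> R) :
  \big[Rplus/R0]_t (- F t) = - \big[Rplus/R0]_t F t.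
Proof.
rewrite -(Rmult_1_l (\big[Rplus/R0]_t F t)) Ropp_mult_distr_l -sumZl.
by apply: eq_bigr => t _; ring.
Qed.

Lemma sumB (T : finType) (F G : T -> R) :
  \big[Rplus/R0]_t (F t - G t) = \big[Rplus/R0]_t F t - \big[Rplus/R0]_t G t.
Proof. by rewrite big_split /= sumN. Qed.

Lemma sum_const (T : finType) (c : R) :
  \big[Rplus/R0]_(t : T) c = INR #|T| * c.
Proof.
rewrite big_const; elim: #|T| => [|n IH]; first by rewrite /= Rmult_0_l.
rewrite iterS IH S_INR; ring.
Qed.

Section Prod.
Variables (T X : finType) (q : T -> X -> R).
Hypothesis q_ge0 : forall j x, 0 <= q j x.
Hypothesis q_sum : forall j, \big[Rplus/R0]_x q j x = 1.

Definition wt (z : {ffun T -> X}) := \big[Rmult/R1]_j q j (z j).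
Definition EE (f : {ffun T -> X} -> R) := \big[Rplus/R0]_z (wt z * f z).

Lemma wt_ge0 z : 0 <= wt z.
Proof. by apply: rprod_ge0. Qed.

Lemma prod_sum (g : T -> X -> R) :
  \big[Rplus/R0]_(z : {ffun T -> X}) \big[Rmult/R1]_j g j (z j)
  = \big[Rmult/R1]_j \big[Rplus/R0]_x g j x.
Proof. by rewrite bigA_distr_bigA. Qed.

Lemma wt_sum : \big[Rplus/R0]_z wt z = 1.
Proof.
rewrite /wt prod_sum big1 // => j _; exact: q_sum.
Qed.

Lemma EE_const c : EE (fun _ => c) = c.
Proof. by rewrite /EE sumZr wt_sum Rmult_1_l. Qed.

Lemma EE_add f g : EE (fun z => f z + g z) = EE f + EE g.
Proof. rewrite /EE -big_split; apply: eq_bigr => z _ /=. ring. Qed.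

Lemma EE_scal c f : EE (fun z => c * f z) = c * EE f.
Proof. rewrite /EE -sumZl; apply: eq_bigr => z _ /=; ring. Qed.

Lemma EE_opp f : EE (fun z => - f z) = - EE f.
Proof. rewrite /EE -sumN; apply: eq_bigr => z _ /=; ring. Qed.

Lemma EE_sub f g : EE (fun z => f z - g z) = EE f - EE g.
Proof. rewrite /EE -sumB; apply: eq_bigr => z _ /=; ring. Qed.

Lemma EE_sum (I : finType) (F : I -> {ffun T -> X} -> R) :
  EE (fun z => \big[Rplus/R0]_i F i z) = \big[Rplus/R0]_i EE (F i).
Proof.
rewrite /EE exchange_big; apply: eq_bigr => z _; by rewrite big_distrr.
Qed.

Lemma EE_le f g : (forall z, f z <= g z) -> EE f <= EE g.
Proof.
move=> H; apply: rsum_le => z _; apply: Rmult_le_compat_l; [exact: wt_ge0|exact: H].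
Qed.

Lemma EE_ext f g : (forall z, f z = g z) -> EE f = EE g.
Proof. by move=> H; apply: eq_bigr => z _; rewrite H. Qed.

Lemma EE_single j (h : X -> R) : EE (fun z => h (z j)) = \big[Rplus/R0]_x (q j x * h x).
Proof.
pose g i x := if i == j then q i x * h x else q i x.
have E1 z : wt z * h (z j) = \big[Rmult/R1]_i g i (z i).
  rewrite /wt (bigD1 j) //= [in RHS](bigD1 j) //= /g eqxx.
  rewrite [in RHS](eq_bigr (fun i => q i (z i))); first by ring.
  by move=> i /negbTE ->.
rewrite /EE (eq_bigr _ (fun z _ => E1 z)) prod_sum (bigD1 j) //=.
rewrite [X in _ * X]big1.
  by rewrite Rmult_1_r /g; apply: eq_bigr => x _; rewrite eqxx.
by move=> i /negbTE Hi; rewrite /g Hi q_sum.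
Qed.

Definition dep (P : pred T) (f : {ffun T -> X} -> R) :=
  forall z z' : {ffun T -> X}, (forall j, P j -> z j = z' j) -> f z = f z'.

Definition merge (P : pred T) (z y : {ffun T -> X}) : {ffun T -> X} :=
  [ffun j => if P j then z j else y j].

Lemma EE_indep (P : pred T) f g :
  dep P f -> dep (predC P) g -> EE (fun z => f z * g z) = EE f * EE g.
Proof.
move=> Hf Hg.
pose h (p : {ffun T -> X} * {ffun T -> X}) := (merge P p.1 p.2, merge P p.2 p.1).
have hK : involutive h.
  case=> z y; rewrite /h /=; congr pair; apply/ffunP => j; rewrite !ffunE;
  by case: (P j).
have Hw z y : wt (merge P z y) * wt (merge P y z) = wt z * wt y.
  rewrite /wt -!big_split /=; apply: eq_bigr => j _; rewrite !ffunE.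
  case: (P j) => //; ring.
have L : EE f * EE g = \big[Rplus/R0]_(z : {ffun T -> X}) \big[Rplus/R0]_(y : {ffun T -> X})
            (wt z * wt y * (f z * g y)).
  rewrite /EE big_distrl /=; apply: eq_bigr => z _.
  rewrite big_distrr /=; apply: eq_bigr => y _ /=; ring.
rewrite L pair_bigA /= (reindex_inj (can_inj hK)) /=.
have R1' : EE (fun z => f z * g z) = \big[Rplus/R0]_(z : {ffun T -> X}) \big[Rplus/R0]_(y : {ffun T -> X})
            (wt z * wt y * (f z * g z)).
  rewrite /EE; apply: eq_bigr => z _.
  rewrite -[LHS]Rmult_1_r -wt_sum big_distrr /=; apply: eq_bigr => y _ /=; ring.
rewrite R1' pair_bigA; apply: eq_bigr => [[z y]] _ /=.
rewrite Hw; congr (_ * (_ * _)).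
  by apply: Hf => j Pj; rewrite ffunE Pj.
by apply: Hg => j /= Pj; rewrite ffunE (negbTE Pj).
Qed.

End Prod.

Section Prod2.
Variables (T X : finType) (q : T -> X -> R).
Hypothesis q_ge0 : forall j x, 0 <= q j x.
Hypothesis q_sum : forall j, \big[Rplus/R0]_x q j x = 1.

Lemma dep_mono (P P' : pred T) (f : {ffun T -> X} -> R) : (forall j, P j -> P' j) -> dep P f -> dep P' f.
Proof. move=> H Hf z z' E; apply: Hf => j Pj; apply: E; exact: H. Qed.

Lemma dep_const (P : pred T) c : @dep T X P (fun _ => c).
Proof. by []. Qed.

Lemma dep_add (P : pred T) (f g : {ffun T -> X} -> R) : dep P f -> dep P g -> dep P (fun z => f z + g z).
Proof. by move=> Hf Hg z z' E; rewrite (Hf z z' E) (Hg z z' E). Qed.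

Lemma dep_mul (P : pred T) (f g : {ffun T -> X} -> R) : dep P f -> dep P g -> dep P (fun z => f z * g z).
Proof. by move=> Hf Hg z z' E; rewrite (Hf z z' E) (Hg z z' E). Qed.

Lemma dep_sum (P : pred T) (I : finType) (F : I -> {ffun T -> X} -> R) :
  (forall i, dep P (F i)) -> dep P (fun z => \big[Rplus/R0]_i F i z).
Proof. by move=> H z z' E; apply: eq_bigr => i _; apply: H. Qed.

Lemma dep_sum_nat (P : pred T) (m : nat) (F : nat -> {ffun T -> X} -> R) :
  (forall i : nat, (i < m)%nat -> dep P (F i)) -> dep P (fun z => \big[Rplus/R0]_(i < m) F i z).
Proof. by move=> H z z' E; apply: eq_bigr => i _; apply: H. Qed.

Lemma dep_coord (P : pred T) j (h : X -> R) : P j -> @dep T X P (fun z => h (z j)).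
Proof. by move=> Pj z z' E; rewrite E. Qed.

Lemma EE_peel j (G : X -> {ffun T -> X} -> R) :
  (forall x, dep (predC (pred1 j)) (G x)) ->
  EE q (fun z => G (z j) z) = \big[Rplus/R0]_x (q j x * EE q (G x)).
Proof.
move=> HG.
have -> : EE q (fun z => G (z j) z) =
   EE q (fun z => \big[Rplus/R0]_x ((if z j == x then 1 else 0) * G x z)).
  apply: EE_ext => z; rewrite (bigD1 (z j)) //= eqxx big1 ?Rplus_0_r; first ring.
  by move=> x; rewrite eq_sym => /negbTE ->; ring.
rewrite EE_sum; apply: eq_bigr => x _.
rewrite (@EE_indep _ _ q q_sum (pred1 j)) //.
  rewrite (EE_single q_sum j (fun y => if y == x then 1 else 0)).
  rewrite (bigD1 x) //= eqxx big1 ?Rplus_0_r //; first ring.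
  by move=> y /negbTE ->; ring.
rewrite /dep => z z' E; by rewrite (E j (eqxx j)).
Qed.

End Prod2.

Section Blocks.
Variables (X : finType) (q : X -> R).
Hypothesis q_ge0 : forall x, 0 <= q x.
Hypothesis q_sum : \big[Rplus/R0]_x q x = 1.
Variables (N m : nat).
Hypothesis Hm : (6 * m <= N.+1)%nat.
Variables (I : finType) (Yf : X -> X -> X -> I -> R).

Let T := 'I_N.+1.
Let qq (j : T) := q.
Let qq_sum : forall j, \big[Rplus/R0]_x qq j x = 1. Proof. by []. Qed.

Definition uu (b r : nat) : 'I_N.+1 := inord (b * 3 + r).
Definition Yb (b : nat) (i : I) (z : {ffun 'I_N.+1 -> X}) :=
  Yf (z (uu b 0)) (z (uu b 1)) (z (uu b 2)) i.
Definition E3 (F : X -> X -> X -> R) :=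
  \big[Rplus/R0]_x (q x * \big[Rplus/R0]_y (q y * \big[Rplus/R0]_w (q w * F x y w))).

Lemma uu_val b r : (b < 2 * m)%nat -> (r < 3)%nat -> nat_of_ord (uu b r) = (b * 3 + r)%nat.
Proof. move=> Hb Hr; rewrite /uu inordK //; lia. Qed.

Lemma uu_div b r : (b < 2 * m)%nat -> (r < 3)%nat -> ((uu b r) %/ 3 = b)%nat.
Proof. move=> Hb Hr; rewrite uu_val //; lia. Qed.

Lemma uu_neq b r r' : (b < 2 * m)%nat -> (r < 3)%nat -> (r' < 3)%nat -> r <> r' -> uu b r != uu b r'.
Proof.
move=> Hb Hr Hr' Hrr; apply/eqP => E; have := congr1 (@nat_of_ord _) E.
rewrite !uu_val //; lia.
Qed.

Lemma E_block b (F : X -> X -> X -> R) : (b < 2 * m)%nat ->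
  EE qq (fun z => F (z (uu b 0)) (z (uu b 1)) (z (uu b 2))) = E3 F.
Proof.
move=> Hb.
rewrite (@EE_peel _ _ qq qq_sum (uu b 0) (fun x z => F x (z (uu b 1)) (z (uu b 2)))).
  rewrite /E3; apply: eq_bigr => x _; congr (_ * _).
  rewrite (@EE_peel _ _ qq qq_sum (uu b 1) (fun y z => F x y (z (uu b 2)))).
    apply: eq_bigr => y _; congr (_ * _).
    by rewrite (@EE_single _ _ qq qq_sum (uu b 2) (fun w => F x y w)).
  move=> y z z' E; rewrite (E (uu b 2)) //=; exact: uu_neq.
move=> x z z' E; rewrite (E (uu b 1)) ?(E (uu b 2)) //=; exact: uu_neq.
Qed.

Definition Pb (b : nat) := fun j : 'I_N.+1 => (j %/ 3 == b)%nat.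

Lemma dep_Yb b i : (b < 2 * m)%nat -> dep (Pb b) (Yb b i).
Proof.
move=> Hb z z' E; rewrite /Yb !E //= /Pb uu_div //.
Qed.

Definition mu (i : I) := E3 (fun x y w => Yf x y w i).
Definition Pm (i j : I) := E3 (fun x y w => Yf x y w i * Yf x y w j).

Lemma E_Yb b i : (b < 2 * m)%nat -> EE qq (Yb b i) = mu i.
Proof. move=> Hb; exact: (E_block (fun x y w => Yf x y w i)). Qed.

Lemma E_YbYb b i j : (b < 2 * m)%nat -> EE qq (fun z => Yb b i z * Yb b j z) = Pm i j.
Proof. move=> Hb; exact: (E_block (fun x y w => Yf x y w i * Yf x y w j)). Qed.

Lemma E_YbYb' b b' i j : (b < 2 * m)%nat -> (b' < 2 * m)%nat -> b <> b' ->
  EE qq (fun z => Yb b i z * Yb b' j z) = mu i * mu j.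
Proof.
move=> Hb Hb' Hbb.
rewrite (@EE_indep _ _ qq qq_sum (Pb b)); first by rewrite !E_Yb.
  exact: dep_Yb.
apply: dep_mono (dep_Yb j Hb') => k; rewrite /Pb /= => /eqP ->; apply/eqP; lia.
Qed.

Definition Ag (o : nat) (i : I) (z : {ffun 'I_N.+1 -> X}) :=
  \big[Rplus/R0]_(b < m) Yb (o + b) i z.

Lemma E_Ag o i : (o <= m)%nat -> EE qq (Ag o i) = INR m * mu i.
Proof.
move=> Ho; rewrite /Ag EE_sum (eq_bigr (fun _ => mu i)) ?sum_const ?card_ord //.
move=> b _; apply: E_Yb; have := ltn_ord b; lia.
Qed.

Lemma E_AgAg o i j : (o <= m)%nat ->
  EE qq (fun z => Ag o i z * Ag o j z) =
  INR m * (INR m * (mu i * mu j) + (Pm i j - mu i * mu j)).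
Proof.
move=> Ho.
have -> : EE qq (fun z => Ag o i z * Ag o j z) =
    EE qq (fun z => \big[Rplus/R0]_(b < m) \big[Rplus/R0]_(b' < m) (Yb (o + b) i z * Yb (o + b') j z)).
  apply: EE_ext => z; rewrite /Ag big_distrl /=; apply: eq_bigr => b _.
  by rewrite big_distrr.
rewrite EE_sum (eq_bigr (fun _ => INR m * (mu i * mu j) + (Pm i j - mu i * mu j))).
  by rewrite sum_const card_ord.
move=> b _; rewrite EE_sum.
rewrite (eq_bigr (fun b' : 'I_m => mu i * mu j + (if b == b' then Pm i j - mu i * mu j else 0))).
  by rewrite big_split /= rsum_pred1 sum_const card_ord.
move=> b' _; case: eqP => [<-|Hne].
  rewrite E_YbYb; first ring. have := ltn_ord b; lia.
rewrite E_YbYb'; first ring.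
- have := ltn_ord b; lia.
- have := ltn_ord b'; lia.
move=> E; apply: Hne; apply: val_inj => /=; lia.
Qed.

Definition Qg := fun j : 'I_N.+1 => (j %/ 3 < m)%nat.

Lemma dep_Ag0 i : dep Qg (Ag 0 i).
Proof.
apply: dep_sum => b; apply: dep_mono (dep_Yb i _); last by have := ltn_ord b; lia.
by move=> k; rewrite /Pb /Qg => /eqP ->; rewrite add0n.
Qed.

Lemma dep_Agm i : dep (predC Qg) (Ag m i).
Proof.
apply: dep_sum => b; apply: dep_mono (dep_Yb i _); last by have := ltn_ord b; lia.
by move=> k; rewrite /Pb /Qg /= => /eqP ->; rewrite -leqNgt leq_addr.
Qed.

Definition Sstat (z : {ffun 'I_N.+1 -> X}) := \big[Rplus/R0]_i (Ag 0 i z * Ag m i z).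

Lemma E_S : EE qq Sstat = \big[Rplus/R0]_i ((INR m * mu i) * (INR m * mu i)).
Proof.
rewrite /Sstat EE_sum; apply: eq_bigr => i _.
rewrite (@EE_indep _ _ qq qq_sum Qg); last exact: dep_Agm; last exact: dep_Ag0.
by rewrite !E_Ag.
Qed.

Definition Gm i j := INR m * (INR m * (mu i * mu j) + (Pm i j - mu i * mu j)).

Lemma E_S2 : EE qq (fun z => Sstat z * Sstat z) = \big[Rplus/R0]_i \big[Rplus/R0]_j (Gm i j * Gm i j).
Proof.
have -> : EE qq (fun z => Sstat z * Sstat z) =
  EE qq (fun z => \big[Rplus/R0]_i \big[Rplus/R0]_j ((Ag 0 i z * Ag 0 j z) * (Ag m i z * Ag m j z))).
  apply: EE_ext => z; rewrite /Sstat big_distrl /=; apply: eq_bigr => i _.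
  rewrite big_distrr /=; apply: eq_bigr => j _ /=; ring.
rewrite EE_sum; apply: eq_bigr => i _; rewrite EE_sum; apply: eq_bigr => j _.
rewrite (@EE_indep _ _ qq qq_sum Qg).
- rewrite !E_AgAg //; lia.
- apply: dep_mul; exact: dep_Ag0.
- apply: dep_mul; exact: dep_Agm.
Qed.

End Blocks.

Section Bits.
Variables (k : nat) (c : R).
Hypothesis c_pos : 0 < c.
Hypothesis c_le : c <= 1 / 16.

Definition sg := (1 + c) / 2.
Definition rho (b x : bool) := if b == x then sg else 1 - sg.
Definition qa (a : 'I_k) (i : 'I_k) (b : bool) := rho b (i == a).
Definition uf (s : {ffun 'I_k -> bool}) (i : 'I_k) := (if s i then 1 else 0) - (1 - sg).

Lemma qa_ge0 a i b : 0 <= qa a i b.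
Proof. rewrite /qa /rho /sg; case: eqP => _; lra. Qed.

Lemma qa_sum a i : \big[Rplus/R0]_b qa a i b = 1.
Proof. rewrite big_bool /qa /rho /sg; case: (i == a) => /=; lra. Qed.

Lemma Euf a i : EE (qa a) (fun s => uf s i) = if i == a then c else 0.
Proof.
rewrite (@EE_single _ _ (qa a) (qa_sum a) i (fun b => (if b then 1 else 0) - (1 - sg))).
rewrite big_bool /qa /rho /sg; case: (i == a) => /=; field.
Qed.

Lemma Mb_off a i i' : i != i' -> EE (qa a) (fun s => uf s i * uf s i') = 0.
Proof.
move=> Hii.
rewrite (@EE_indep _ _ (qa a) (qa_sum a) (pred1 i)).
- rewrite !Euf; case: (eqVneq i a) => [Ei|]; last by rewrite Rmult_0_l.
  by rewrite Ei eq_sym in Hii; rewrite (negbTE Hii) Rmult_0_r.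
- by move=> z z' E; rewrite /uf (E i (eqxx i)).
- by move=> z z' E; rewrite /uf (E i') //= eq_sym.
Qed.

Lemma uf_sq s i : 0 <= uf s i * uf s i <= 1.
Proof. rewrite /uf /sg; case: (s i); split; nra. Qed.

Lemma Mb_diag a i : 0 <= EE (qa a) (fun s => uf s i * uf s i) <= 1.
Proof.
split.
- rewrite -(EE_const (qa_sum a) 0); apply: EE_le; first exact: qa_ge0.
  by move=> s; case: (uf_sq s i).
- rewrite -(EE_const (qa_sum a) 1); apply: EE_le; first exact: qa_ge0.
  by move=> s; case: (uf_sq s i).
Qed.

Definition Rch (a : 'I_k) (s : {ffun 'I_k -> bool}) := wt (qa a) s.

Lemma Rch_ge0 a s : 0 <= Rch a s.
Proof. apply: wt_ge0; exact: qa_ge0. Qed.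

Lemma Rch_sum a : \big[Rplus/R0]_s Rch a s = 1.
Proof. exact: (wt_sum (qa_sum a)). Qed.

Definition kap := (1 + c) / (1 - c).
Definition lam (b : bool) := if b then kap else / kap.
Definition Kf (s : {ffun 'I_k -> bool}) := \big[Rmult/R1]_i rho (s i) false.

Lemma kap_ge1 : 1 <= kap.
Proof.
have h : 0 < 1 - c by lra.
rewrite /kap (_ : (1+c)/(1-c) = 1 + 2*c * /(1-c)); last by field; lra.
have : 0 < /(1-c) by apply: Rinv_0_lt_compat.
nra.
Qed.

Lemma Rch_K a s : Rch a s = Kf s * lam (s a).
Proof.
rewrite /Rch /wt /Kf (bigD1 a) //= [in RHS](bigD1 a) //= /qa eqxx.
rewrite (eq_bigr (fun i => rho (s i) false)); last by move=> i /negbTE ->.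
rewrite /lam /rho /kap /sg; case: (s a) => /=; field; lra.
Qed.

Lemma Rch_LDP a a' s : Rch a s <= kap * kap * Rch a' s.
Proof.
rewrite !Rch_K.
have K0 : 0 <= Kf s by apply: rprod_ge0 => i _; rewrite /rho /sg; case: eqP => _; lra.
have k1 := kap_ge1.
have Hl b : / kap <= lam b <= kap.
  rewrite /lam; case: b; split; try lra.
  - apply: Rle_trans (_ : 1 <= kap) => //. rewrite -Rinv_1; apply: Rinv_le_contravar; lra.
  - apply: Rle_trans (_ : 1 <= kap) => //. rewrite -Rinv_1; apply: Rinv_le_contravar; lra.
have [l1 l2] := Hl (s a); have [l3 l4] := Hl (s a').
have E : kap * / kap = 1 by field; lra.
have H2 : lam (s a) <= kap * kap * lam (s a').
  have : kap * kap * / kap <= kap * kap * lam (s a').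
    apply: Rmult_le_compat_l => //; nra.
  rewrite Rmult_assoc E; lra.
rewrite -Rmult_assoc (Rmult_comm (kap * kap)) Rmult_assoc.
by apply: Rmult_le_compat_l.
Qed.

End Bits.

Section E3gen.
Variables (X : finType) (q : X -> R).
Hypothesis q_sum : \big[Rplus/R0]_x q x = 1.
Definition E1 (f : X -> R) := \big[Rplus/R0]_x (q x * f x).

Lemma E3_ext F G : (forall x y w, F x y w = G x y w) -> E3 q F = E3 q G.
Proof.
move=> H; apply: eq_bigr => x _; congr (_ * _); apply: eq_bigr => y _; congr (_ * _).
by apply: eq_bigr => w _; rewrite H.
Qed.

Lemma E3_add F G : E3 q (fun x y w => F x y w + G x y w) = E3 q F + E3 q G.
Proof.
rewrite /E3 -big_split; apply: eq_bigr => x _ /=; rewrite -Rmult_plus_distr_l; congr (_ * _).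
rewrite -big_split; apply: eq_bigr => y _ /=; rewrite -Rmult_plus_distr_l; congr (_ * _).
rewrite -big_split; apply: eq_bigr => w _ /=; ring.
Qed.

Lemma E3_opp F : E3 q (fun x y w => - F x y w) = - E3 q F.
Proof.
rewrite /E3 -sumN; apply: eq_bigr => x _ /=; rewrite Ropp_mult_distr_r; congr (_ * _).
rewrite -sumN; apply: eq_bigr => y _ /=; rewrite Ropp_mult_distr_r; congr (_ * _).
rewrite -sumN; apply: eq_bigr => w _ /=; ring.
Qed.

Lemma E3_sub F G : E3 q (fun x y w => F x y w - G x y w) = E3 q F - E3 q G.
Proof. by rewrite /Rminus E3_add E3_opp. Qed.

Lemma E3_sep f1 f2 f3 : E3 q (fun x y w => f1 x * (f2 y * f3 w)) = E1 f1 * (E1 f2 * E1 f3).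
Proof.
have H1 x y : \big[Rplus/R0]_w (q w * (f1 x * (f2 y * f3 w))) = f1 x * f2 y * E1 f3.
  rewrite /E1 big_distrr /=; apply: eq_bigr => w _; ring.
have H2 x : \big[Rplus/R0]_y (q y * \big[Rplus/R0]_w (q w * (f1 x * (f2 y * f3 w))))
             = f1 x * (E1 f2 * E1 f3).
  rewrite (eq_bigr (fun y => (f1 x * E1 f3) * (q y * f2 y))); last by move=> y _; rewrite H1; ring.
  rewrite -big_distrr /= /E1; ring.
rewrite /E3 (eq_bigr (fun x => (E1 f2 * E1 f3) * (q x * f1 x))); last by move=> x _; rewrite H2; ring.
rewrite -big_distrr /= /E1; ring.
Qed.

Lemma E1_const a : E1 (fun _ => a) = a.
Proof. by rewrite /E1 sumZr q_sum Rmult_1_l. Qed.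
End E3gen.

Section Users.
Variables (k : nat) (c : R).
Hypothesis c_pos : 0 < c.
Hypothesis c_le : c <= 1 / 16.
Variable p : pair_dom k -> R.
Hypothesis p_ge0 : forall x, 0 <= p x.
Hypothesis p_sum : \big[Rplus/R0]_x p x = 1.

Definition BB := {ffun 'I_k -> bool}.
Definition Zt := (BB * BB)%type.
Definition Wch (x : pair_dom k) (z : Zt) := Rch c x.1 z.1 * Rch c x.2 z.2.
Definition qZ (z : Zt) := \big[Rplus/R0]_(x : pair_dom k) (p x * Wch x z).

Lemma Wch_ge0 x z : 0 <= Wch x z.
Proof. rewrite /Wch; apply: Rmult_le_pos; apply: Rch_ge0; lra. Qed.

Lemma Wch_sum x : \big[Rplus/R0]_z Wch x z = 1.
Proof.
rewrite /Wch -(pair_big xpredT xpredT (fun a b => Rch c x.1 a * Rch c x.2 b)) /=.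
rewrite (eq_bigr (fun a => Rch c x.1 a * 1)).
  by rewrite -big_distrl /= Rch_sum Rmult_1_l.
by move=> a _; rewrite -big_distrr /= Rch_sum.
Qed.

Lemma qZ_ge0 z : 0 <= qZ z.
Proof. apply: rsum_ge0 => x _; apply: Rmult_le_pos => //; exact: Wch_ge0. Qed.

Lemma qZ_sum : \big[Rplus/R0]_z qZ z = 1.
Proof.
rewrite /qZ exchange_big /= -p_sum; apply: eq_bigr => x _.
by rewrite -big_distrr /= Wch_sum Rmult_1_r.
Qed.

Lemma EZ_sep (h1 h2 : BB -> R) :
  E1 qZ (fun z => h1 z.1 * h2 z.2) =
  \big[Rplus/R0]_x (p x * (EE (qa c x.1) h1 * EE (qa c x.2) h2)).
Proof.
rewrite /E1 /qZ.
rewrite (eq_bigr (fun z => \big[Rplus/R0]_x (p x * (Wch x z * (h1 z.1 * h2 z.2))))); last first.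
  move=> z _; rewrite big_distrl; apply: eq_bigr => x _; simpl; rewrite !Rmult_assoc; reflexivity.
rewrite exchange_big /=; apply: eq_bigr => x _.
rewrite -big_distrr /=; congr (_ * _).
rewrite -(pair_big xpredT xpredT (fun a b => Wch x (a, b) * (h1 a * h2 b))) /=.
rewrite /EE big_distrl /=; apply: eq_bigr => a _.
rewrite big_distrr /=; apply: eq_bigr => b _.
rewrite /Wch /Rch /=; ring.
Qed.

Definition p1 (a : 'I_k) := \big[Rplus/R0]_(b : 'I_k) p (a, b).
Definition p2 (b : 'I_k) := \big[Rplus/R0]_(a : 'I_k) p (a, b).

Lemma sum_pair (F : pair_dom k -> R) :
  \big[Rplus/R0]_x F x = \big[Rplus/R0]_(a : 'I_k) \big[Rplus/R0]_(b : 'I_k) F (a, b).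
Proof. by rewrite (pair_big xpredT xpredT (fun a b => F (a, b))); apply: eq_bigr => -[]. Qed.

Lemma E1_ext (f g : Zt -> R) : (forall z, f z = g z) -> E1 qZ f = E1 qZ g.
Proof. by move=> H; apply: eq_bigr => z _; rewrite H. Qed.

Definition Mb (a i i' : 'I_k) := EE (qa c a) (fun s => uf c s i * uf c s i').

Lemma EZ_sep1 (h : BB -> R) :
  E1 qZ (fun z => h z.1) = \big[Rplus/R0]_x (p x * EE (qa c x.1) h).
Proof.
rewrite (E1_ext (g := fun z => h z.1 * (fun _ => 1) z.2)); last by move=> z; rewrite Rmult_1_r.
rewrite (EZ_sep h (fun _ => 1)); apply: eq_bigr => x _; rewrite (EE_const (qa_sum c _)) Rmult_1_r //.
Qed.

Lemma EZ_sep2 (h : BB -> R) :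
  E1 qZ (fun z => h z.2) = \big[Rplus/R0]_x (p x * EE (qa c x.2) h).
Proof.
rewrite (E1_ext (g := fun z => (fun _ => 1) z.1 * h z.2)); last by move=> z; rewrite Rmult_1_l.
rewrite (EZ_sep (fun _ => 1) h); apply: eq_bigr => x _; rewrite (EE_const (qa_sum c _)) Rmult_1_l //.
Qed.

Lemma EZ_u1 i : E1 qZ (fun z => uf c z.1 i) = c * p1 i.
Proof.
rewrite (EZ_sep1 (fun s => uf c s i)) sum_pair.
rewrite (eq_bigr (fun a => if i == a then c * p1 a else 0)) ?rsum_pred1 //.
move=> a _.
rewrite (eq_bigr (fun b => (if i == a then c else 0) * p (a,b))); last by move=> b _; rewrite Euf /=; ring.
rewrite -big_distrr /= -/(p1 a); case: (i == a); ring.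
Qed.

Lemma EZ_u2 j : E1 qZ (fun z => uf c z.2 j) = c * p2 j.
Proof.
rewrite (EZ_sep2 (fun s => uf c s j)) sum_pair exchange_big /=.
rewrite (eq_bigr (fun b => if j == b then c * p2 b else 0)) ?rsum_pred1 //.
move=> b _.
rewrite (eq_bigr (fun a => (if j == b then c else 0) * p (a,b))); last by move=> a _; rewrite Euf /=; ring.
rewrite -big_distrr /= -/(p2 b); case: (j == b); ring.
Qed.

Lemma EZ_V I : E1 qZ (fun z => uf c z.1 I.1 * uf c z.2 I.2) = c * c * p I.
Proof.
rewrite (EZ_sep (fun s => uf c s I.1) (fun s => uf c s I.2)).
rewrite (eq_bigr (fun x => if I == x then c * c * p x else 0)) ?rsum_pred1 //.
move=> x _; rewrite !Euf //; case: I => i j; case: x => a b /=.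
rewrite xpair_eqE; case: (i == a); case: (j == b) => /=; ring.
Qed.

Lemma EZ_G2 i i' : E1 qZ (fun z => uf c z.1 i * uf c z.1 i') = \big[Rplus/R0]_x (p x * Mb x.1 i i').
Proof. by rewrite (EZ_sep1 (fun s => uf c s i * uf c s i')). Qed.

Lemma EZ_H2 j j' : E1 qZ (fun z => uf c z.2 j * uf c z.2 j') = \big[Rplus/R0]_x (p x * Mb x.2 j j').
Proof. by rewrite (EZ_sep2 (fun s => uf c s j * uf c s j')). Qed.

Lemma EZ_V2 I J : E1 qZ (fun z => (uf c z.1 I.1 * uf c z.2 I.2) * (uf c z.1 J.1 * uf c z.2 J.2))
  = \big[Rplus/R0]_x (p x * (Mb x.1 I.1 J.1 * Mb x.2 I.2 J.2)).
Proof.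
rewrite (E1_ext (g := fun z => (fun s => uf c s I.1 * uf c s J.1) z.1 * (fun s => uf c s I.2 * uf c s J.2) z.2)).
  by rewrite (EZ_sep (fun s => uf c s I.1 * uf c s J.1) (fun s => uf c s I.2 * uf c s J.2)).
by case=> s t /=; ring.
Qed.

Definition Yf (z1 z2 z3 : Zt) (I : pair_dom k) :=
  uf c z1.1 I.1 * uf c z1.2 I.2 - uf c z2.1 I.1 * uf c z3.2 I.2.

Definition ev (I : pair_dom k) := c * c * p I.
Definition fv (I : pair_dom k) := c * p1 I.1 * (c * p2 I.2).
Definition PV (I J : pair_dom k) := \big[Rplus/R0]_x (p x * (Mb x.1 I.1 J.1 * Mb x.2 I.2 J.2)).
Definition PG (I J : pair_dom k) :=
  \big[Rplus/R0]_x (p x * Mb x.1 I.1 J.1) * \big[Rplus/R0]_x (p x * Mb x.2 I.2 J.2).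

Lemma mu_eq I : mu qZ Yf I = ev I - fv I.
Proof.
rewrite /mu /Yf E3_sub.
rewrite (@E3_ext _ qZ _ (fun x y w => (fun z => uf c z.1 I.1 * uf c z.2 I.2) x * ((fun _ => 1) y * (fun _ => 1) w))); last by move=> [? ?] [? ?] [? ?] /=; ring.
rewrite (E3_sep _ (fun z => uf c z.1 I.1 * uf c z.2 I.2) (fun _ => 1) (fun _ => 1)).
rewrite (@E3_ext _ qZ _ (fun x y w => (fun _ => 1) x * ((fun z => uf c z.1 I.1) y * (fun z => uf c z.2 I.2) w))); last by move=> [? ?] [? ?] [? ?] /=; ring.
rewrite (E3_sep _ (fun _ => 1) (fun z => uf c z.1 I.1) (fun z => uf c z.2 I.2)) !E1_const ?qZ_sum // EZ_V EZ_u1 EZ_u2 /ev /fv; ring.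
Qed.

Lemma Pm_eq I J : Pm qZ Yf I J = PV I J - ev I * fv J - fv I * ev J + PG I J.
Proof.
rewrite /Pm /Yf.
rewrite (@E3_ext _ qZ _ (fun x y w =>
   ((fun z => (uf c z.1 I.1 * uf c z.2 I.2) * (uf c z.1 J.1 * uf c z.2 J.2)) x * ((fun _ => 1) y * (fun _ => 1) w)
  - (fun z => uf c z.1 I.1 * uf c z.2 I.2) x * ((fun z => uf c z.1 J.1) y * (fun z => uf c z.2 J.2) w))
  - (fun z => uf c z.1 J.1 * uf c z.2 J.2) x * ((fun z => uf c z.1 I.1) y * (fun z => uf c z.2 I.2) w)
  + (fun _ => 1) x * ((fun z => uf c z.1 I.1 * uf c z.1 J.1) y * (fun z => uf c z.2 I.2 * uf c z.2 J.2) w)));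
  last by move=> [? ?] [? ?] [? ?] /=; ring.
rewrite E3_add !E3_sub.
rewrite (E3_sep _ (fun z => (uf c z.1 I.1 * uf c z.2 I.2) * (uf c z.1 J.1 * uf c z.2 J.2)) (fun _ => 1) (fun _ => 1)).
rewrite (E3_sep _ (fun z => uf c z.1 I.1 * uf c z.2 I.2) (fun z => uf c z.1 J.1) (fun z => uf c z.2 J.2)).
rewrite (E3_sep _ (fun z => uf c z.1 J.1 * uf c z.2 J.2) (fun z => uf c z.1 I.1) (fun z => uf c z.2 I.2)).
rewrite (E3_sep _ (fun _ => 1) (fun z => uf c z.1 I.1 * uf c z.1 J.1) (fun z => uf c z.2 I.2 * uf c z.2 J.2)).
rewrite !E1_const ?qZ_sum //.
rewrite EZ_V2 !EZ_V !EZ_u1 !EZ_u2 EZ_G2 EZ_H2 /PV /PG /ev /fv; rewrite !Rmult_1_l !Rmult_1_r (Rmult_comm (c * p1 I.1 * _)); reflexivity.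
Qed.

End Users.

Section Alg.
Variable T : finType.
Local Notation "\S_ ( i ) F" := (\big[Rplus/R0]_(i : T) F) (at level 41, F at level 41, i at level 50).

Lemma dsum_lin3 (F1 F2 F3 : T -> T -> R) a b c :
  \big[Rplus/R0]_i \big[Rplus/R0]_j (a * F1 i j + b * F2 i j + c * F3 i j) =
  a * \big[Rplus/R0]_i \big[Rplus/R0]_j F1 i j + b * \big[Rplus/R0]_i \big[Rplus/R0]_j F2 i j
  + c * \big[Rplus/R0]_i \big[Rplus/R0]_j F3 i j.
Proof.
rewrite !big_distrr /= -!big_split /=; apply: eq_bigr => i _.
rewrite !big_distrr /= -!big_split /=; apply: eq_bigr => j _ //.
Qed.

Lemma dsum_add (F G : T -> T -> R) :
  \big[Rplus/R0]_i \big[Rplus/R0]_j (F i j + G i j) =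
  \big[Rplus/R0]_i \big[Rplus/R0]_j F i j + \big[Rplus/R0]_i \big[Rplus/R0]_j G i j.
Proof. rewrite -big_split; apply: eq_bigr => i _; by rewrite -big_split. Qed.

Lemma dsum_scal (F : T -> T -> R) a :
  \big[Rplus/R0]_i \big[Rplus/R0]_j (a * F i j) = a * \big[Rplus/R0]_i \big[Rplus/R0]_j F i j.
Proof. rewrite big_distrr; apply: eq_bigr => i _; by rewrite big_distrr. Qed.

Lemma dsum_prod (f g : T -> R) :
  \big[Rplus/R0]_i \big[Rplus/R0]_j (f i * g j) = \big[Rplus/R0]_i f i * \big[Rplus/R0]_j g j.
Proof. rewrite big_distrl /=; apply: eq_bigr => i _; by rewrite big_distrr. Qed.

Definition isdiag (M : T -> T -> R) := (forall i j, i != j -> M i j = 0) /\ (forall i, 0 <= M i i <= 1).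

Lemma diag_row (M : T -> T -> R) (F : T -> R) i : (forall j, i != j -> M i j = 0) ->
  \big[Rplus/R0]_j (F j * M i j) = F i * M i i.
Proof.
move=> H; rewrite (bigD1 i) //= big1 ?Rplus_0_r // => j Hj.
rewrite H ?Rmult_0_r //; by rewrite eq_sym.
Qed.

Lemma diag_sq (M N : T -> T -> R) : isdiag M -> isdiag N ->
  \big[Rplus/R0]_i \big[Rplus/R0]_j (M i j * N i j) <= INR #|T|.
Proof.
move=> [M0 M1] [N0 N1].
rewrite -(Rmult_1_r (INR _)) -sum_const; apply: rsum_le => i _.
rewrite (@diag_row N (fun j => M i j) i); last by move=> j Hj; rewrite N0.
have := M1 i; have := N1 i; nra.
Qed.

Lemma diag_quad (M : T -> T -> R) (mu : T -> R) : isdiag M ->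
  \big[Rplus/R0]_i \big[Rplus/R0]_j (mu i * mu j * M i j) <= \big[Rplus/R0]_i (mu i * mu i).
Proof.
move=> [M0 M1]; apply: rsum_le => i _.
rewrite (@diag_row M (fun j => mu i * mu j) i); last exact: M0.
have := M1 i; have := Rle_0_sqr (mu i); rewrite /Rsqr; nra.
Qed.

Lemma sq_ineq4 a b c d : (a - b - c + d) * (a - b - c + d) <= 4 * (a * a + b * b + c * c + d * d).
Proof.
have := Rle_0_sqr (a+b); have := Rle_0_sqr (a+c); have := Rle_0_sqr (a-d);
have := Rle_0_sqr (b-c); have := Rle_0_sqr (b+d); have := Rle_0_sqr (c+d).
rewrite /Rsqr; lra.
Qed.

Lemma sum_sq_le_card (f : T -> R) :
  \big[Rplus/R0]_(i : T) f i * \big[Rplus/R0]_(i : T) f i <= INR #|T| * \big[Rplus/R0]_(i : T) (f i * f i).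
Proof.
have H : 0 <= \big[Rplus/R0]_(i : T) \big[Rplus/R0]_(j : T) ((f i - f j) * (f i - f j)).
  apply: rsum_ge0 => i _; apply: rsum_ge0 => j _; exact: Rle_0_sqr.
rewrite (eq_bigr (fun i => \big[Rplus/R0]_(j : T) (1 * (f i * f i) + 1 * (f j * f j) + (-2) * (f i * f j)))) in H; last first.
  by move=> i _; apply: eq_bigr => j _; ring.
rewrite (dsum_lin3 (fun i j => f i * f i) (fun i j => f j * f j) (fun i j => f i * f j)) dsum_prod in H.
rewrite (eq_bigr (fun i => INR #|T| * (f i * f i))) in H; last by move=> i _; rewrite sum_const.
rewrite [X in _ + 1 * X + _](eq_bigr (fun i => \big[Rplus/R0]_(j : T) (f j * f j))) // in H.
rewrite sum_const -big_distrr /= in H.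
move: H; set a := \big[Rplus/R0]_(i : T) f i; set b := \big[Rplus/R0]_(i : T) (f i * f i). move: (INR #|T| * b) (a * a) => u v; lra.
Qed.

End Alg.

Lemma single_le_sum (T : finType) (f : T -> R) i : (forall j, 0 <= f j) -> f i <= \big[Rplus/R0]_j f j.
Proof.
move=> H; rewrite (bigD1 i) //=; have := rsum_ge0 (P := fun j => j != i) (fun j _ => H j); lra.
Qed.

Section Bounds.
Variables (k : nat) (c : R).
Hypothesis c_pos : 0 < c.
Hypothesis c_le : c <= 1 / 16.
Variable p : pair_dom k -> R.
Hypothesis p_ge0 : forall x, 0 <= p x.
Hypothesis p_sum : \big[Rplus/R0]_x p x = 1.

Lemma wavg01 (t : pair_dom k -> R) : (forall x, 0 <= t x <= 1) ->
  0 <= \big[Rplus/R0]_x (p x * t x) <= 1.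
Proof.
move=> H; split.
  apply: rsum_ge0 => x _; have := H x; have := p_ge0 x; nra.
rewrite -p_sum; apply: rsum_le => x _; have := H x; have := p_ge0 x; nra.
Qed.

Lemma Mb01 (a i : 'I_k) : 0 <= Mb c a i i <= 1.
Proof. exact: Mb_diag. Qed.

Lemma PV_diag : isdiag (PV c p).
Proof.
split.
- case=> i j [i' j']; rewrite xpair_eqE negb_and => /orP [H|H];
  rewrite /PV big1 // => x _ /=; rewrite /Mb (Mb_off _ _ H); ring.
- move=> I; apply: wavg01 => x; have := Mb01 x.1 I.1; have := Mb01 x.2 I.2; split; nra.
Qed.

Lemma PG_diag : isdiag (PG c p).
Proof.
split.
- case=> i j [i' j']; rewrite xpair_eqE negb_and => /orP [H|H]; rewrite /PG /=.
    rewrite [X in X * _]big1 ?Rmult_0_l // => x _; rewrite /Mb (Mb_off _ _ H); ring.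
  rewrite [X in _ * X]big1 ?Rmult_0_r // => x _; rewrite /Mb (Mb_off _ _ H); ring.
- move=> I; rewrite /PG.
  have := wavg01 (fun x => Mb01 x.1 I.1); have := wavg01 (fun x => Mb01 x.2 I.2).
  move: (\big[Rplus/R0]_x _) (\big[Rplus/R0]_x _) => u v; split; nra.
Qed.

Lemma p1_sum : \big[Rplus/R0]_a p1 p a = 1.
Proof. by rewrite -p_sum sum_pair. Qed.

Lemma p2_sum : \big[Rplus/R0]_b p2 p b = 1.
Proof. by rewrite -p_sum sum_pair exchange_big. Qed.

Lemma p1_ge0 a : 0 <= p1 p a.
Proof. by apply: rsum_ge0. Qed.
Lemma p2_ge0 a : 0 <= p2 p a.
Proof. by apply: rsum_ge0. Qed.

Lemma ev_ge0 I : 0 <= ev c p I.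
Proof. rewrite /ev; have := p_ge0 I; nra. Qed.
Lemma fv_ge0 I : 0 <= fv c p I.
Proof.
rewrite /fv; apply: Rmult_le_pos; (apply: Rmult_le_pos; [lra|]).
  exact: p1_ge0. exact: p2_ge0.
Qed.

Lemma ev_sum : \big[Rplus/R0]_I ev c p I = c * c.
Proof. by rewrite /ev -big_distrr /= p_sum Rmult_1_r. Qed.

Lemma fv_sum : \big[Rplus/R0]_I fv c p I = c * c.
Proof.
rewrite /fv sum_pair.
rewrite (eq_bigr (fun a => c * c * p1 p a * \big[Rplus/R0]_b p2 p b)).
  by rewrite p2_sum -big_distrl /= -big_distrr /= p1_sum; ring.
move=> a _; rewrite big_distrr /=; apply: eq_bigr => b _ /=; ring.
Qed.

Lemma cc_le1 : c * c <= 1.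
Proof. nra. Qed.

Lemma ev_le1 I : ev c p I <= 1.
Proof. have := single_le_sum I ev_ge0; rewrite ev_sum; have := cc_le1; lra. Qed.
Lemma fv_le1 I : fv c p I <= 1.
Proof. have := single_le_sum I fv_ge0; rewrite fv_sum; have := cc_le1; lra. Qed.

Definition muv I := ev c p I - fv c p I.
Definition nm := \big[Rplus/R0]_I (muv I * muv I).

Lemma nm_ge0 : 0 <= nm.
Proof. apply: rsum_ge0 => I _; exact: Rle_0_sqr. Qed.

Lemma nm_le2 : nm <= 2.
Proof.
apply: Rle_trans (_ : \big[Rplus/R0]_I (ev c p I + fv c p I) <= 2).
  apply: rsum_le => I _; rewrite /muv.
  have := ev_ge0 I; have := fv_ge0 I; have := ev_le1 I; have := fv_le1 I.
  move: (ev c p I) (fv c p I) => u v; nra.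
rewrite big_split /= ev_sum fv_sum; have := cc_le1; lra.
Qed.

Definition Pmm I J := PV c p I J - ev c p I * fv c p J - fv c p I * ev c p J + PG c p I J.

Lemma sq_sum_le1 (e : pair_dom k -> R) : (forall I, 0 <= e I) -> (forall I, e I <= 1) ->
  \big[Rplus/R0]_I e I <= 1 -> \big[Rplus/R0]_I (e I * e I) <= 1.
Proof.
move=> H0 H1 Hs; apply: Rle_trans Hs; apply: rsum_le => I _.
have := H0 I; have := H1 I; move: (e I) => u; nra.
Qed.

Lemma SP2_bound : \big[Rplus/R0]_I \big[Rplus/R0]_J (Pmm I J * Pmm I J)
   <= 4 * (2 * INR #|pair_dom k| + 2).
Proof.
apply: Rle_trans (_ : \big[Rplus/R0]_I \big[Rplus/R0]_J
   (4 * (PV c p I J * PV c p I J) + 4 * ((ev c p I * ev c p I) * (fv c p J * fv c p J))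
   + 4 * ((fv c p I * fv c p I) * (ev c p J * ev c p J)) + 4 * (PG c p I J * PG c p I J)) <= _).
  apply: rsum_le => I _; apply: rsum_le => J _; rewrite /Pmm.
  have := sq_ineq4 (PV c p I J) (ev c p I * fv c p J) (fv c p I * ev c p J) (PG c p I J).
  lra.
rewrite !dsum_add !dsum_scal !dsum_prod.
have := diag_sq PV_diag PV_diag; have := diag_sq PG_diag PG_diag.
have es : \big[Rplus/R0]_I ev c p I <= 1 by rewrite ev_sum; exact: cc_le1.
have fs : \big[Rplus/R0]_I fv c p I <= 1 by rewrite fv_sum; exact: cc_le1.
have := sq_sum_le1 ev_ge0 ev_le1 es; have := sq_sum_le1 fv_ge0 fv_le1 fs.
have := rsum_ge0 (P := xpredT) (fun I _ => Rle_0_sqr (ev c p I)).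
have := rsum_ge0 (P := xpredT) (fun I _ => Rle_0_sqr (fv c p I)).
rewrite /Rsqr.
move: (\big[Rplus/R0]_I (ev c p I * ev c p I)) (\big[Rplus/R0]_I (fv c p I * fv c p I)) => a b.
move: (\big[Rplus/R0]_i \big[Rplus/R0]_j (PG c p i j * PG c p i j)) (\big[Rplus/R0]_i \big[Rplus/R0]_j (PV c p i j * PV c p i j)) => g v.
move=> *; nra.
Qed.

Lemma dot_split (u e f : pair_dom k -> R) :
  \big[Rplus/R0]_I (u I * (e I - f I)) = \big[Rplus/R0]_I (u I * e I) - \big[Rplus/R0]_I (u I * f I).
Proof. rewrite -sumB; apply: eq_bigr => I _; ring. Qed.

Lemma SPmu_bound : \big[Rplus/R0]_I \big[Rplus/R0]_J (muv I * muv J * Pmm I J) <= 3 * nm.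
Proof.
rewrite (eq_bigr (fun I => \big[Rplus/R0]_J (1 * (muv I * muv J * PV c p I J) +
     (-1) * ((muv I * ev c p I) * (muv J * fv c p J)) +
     (-1) * ((muv I * fv c p I) * (muv J * ev c p J)) + 1 * (muv I * muv J * PG c p I J)))); last first.
  by move=> I _; apply: eq_bigr => J _; rewrite /Pmm; ring.
rewrite !dsum_add !dsum_scal !dsum_prod.
have h1 := diag_quad muv PV_diag; have h2 := diag_quad muv PG_diag.
rewrite -/nm in h1 h2.
have hd : \big[Rplus/R0]_I (muv I * ev c p I) - \big[Rplus/R0]_I (muv I * fv c p I) = nm.
  by rewrite -dot_split.
have := nm_le2; have := nm_ge0.
move: (\big[Rplus/R0]_I (muv I * ev c p I)) (\big[Rplus/R0]_I (muv I * fv c p I)) hd => a b hd.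
move: (\big[Rplus/R0]_i \big[Rplus/R0]_j (muv i * muv j * PV c p i j)) h1 => x1 h1.
move: (\big[Rplus/R0]_i \big[Rplus/R0]_j (muv i * muv j * PG c p i j)) h2 => x2 h2.
move: nm hd h1 h2 => n hd h1 h2 *.
have := Rle_0_sqr (a + b); rewrite /Rsqr => hs; subst n; nra.
Qed.


End Bounds.

Section Cheb.
Variables (T X : finType) (q : T -> X -> R).
Hypothesis q_ge0 : forall j x, 0 <= q j x.
Hypothesis q_sum : forall j, \big[Rplus/R0]_x q j x = 1.
Variable S : {ffun T -> X} -> R.

Definition Acc (tau : R) (z : {ffun T -> X}) : R := if Rle_dec (S z) tau then 1 else 0.

Lemma cheb_up tau : 0 < tau ->
  1 - EE q (Acc tau) <= EE q (fun z => S z * S z) / (tau * tau).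
Proof.
move=> Ht.
rewrite -(EE_const q_sum 1) -EE_sub /Rdiv Rmult_comm -EE_scal.
apply: EE_le => // z; rewrite /Acc; case: Rle_dec => H.
  rewrite Rminus_diag; apply: Rmult_le_pos; last exact: Rle_0_sqr.
  apply: Rlt_le; apply: Rinv_0_lt_compat; nra.
have Htt : 0 < tau * tau by nra.
have -> : 1 - 0 = (tau * tau) * / (tau * tau) by field; lra.
rewrite Rmult_comm; apply: Rmult_le_compat_l.
  by apply: Rlt_le; apply: Rinv_0_lt_compat.
nra.
Qed.

Lemma cheb_lo tau L : tau < L ->
  EE q (Acc tau) <= (EE q (fun z => S z * S z) - 2 * L * EE q S + L * L) / ((L - tau) * (L - tau)).
Proof.
move=> Ht.
have -> : EE q (fun z => S z * S z) - 2 * L * EE q S + L * L =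
   EE q (fun z => (S z - L) * (S z - L)).
  rewrite (@EE_ext _ _ q (fun z => (S z - L) * (S z - L))
     (fun z => (S z * S z + (- (2 * L)) * S z) + L * L)); last by move=> z; ring.
  rewrite !EE_add EE_scal EE_const //; ring.
rewrite /Rdiv Rmult_comm -EE_scal.
have Htt : 0 < (L - tau) * (L - tau) by nra.
apply: EE_le => // z; rewrite /Acc; case: Rle_dec => H.
  have -> : 1 = ((L - tau) * (L - tau)) * / ((L - tau) * (L - tau)) by field; lra.
  rewrite (Rmult_comm (/ _)); apply: Rmult_le_compat_r.
    by apply: Rlt_le; apply: Rinv_0_lt_compat.
  nra.
apply: Rmult_le_pos; last exact: Rle_0_sqr.
by apply: Rlt_le; apply: Rinv_0_lt_compat.
Qed.

End Cheb.

Section Stat.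
Variables (k : nat) (c : R).
Hypothesis c_pos : 0 < c.
Hypothesis c_le : c <= 1 / 16.
Variable p : pair_dom k -> R.
Hypothesis p_ge0 : forall x, 0 <= p x.
Hypothesis p_sum : \big[Rplus/R0]_x p x = 1.
Variables (N m : nat).
Hypothesis Hm : (6 * m <= N.+1)%nat.

Definition qq := fun _ : 'I_N.+1 => qZ c p.
Definition Sst := @Sstat (Zt k) N m _ (Yf c).

Local Notation M := (INR m).
Let SPmu := \big[Rplus/R0]_I \big[Rplus/R0]_J (muv c p I * muv c p J * Pmm c p I J).
Let SP2 := \big[Rplus/R0]_I \big[Rplus/R0]_J (Pmm c p I J * Pmm c p I J).

Lemma ES : EE qq Sst = M * M * nm c p.
Proof.
rewrite /Sst /qq (E_S (qZ_sum c p_sum) Hm) /nm big_distrr /=; apply: eq_bigr => I _.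
rewrite (mu_eq c p_sum) /muv; ring.
Qed.

Lemma ES2 : EE qq (fun z => Sst z * Sst z) =
  (M * M * ((M - 1) * (M - 1))) * (nm c p * nm c p) + (2 * (M * M) * (M - 1)) * SPmu + (M * M) * SP2.
Proof.
rewrite /Sst /qq (E_S2 (qZ_sum c p_sum) Hm).
rewrite (eq_bigr (fun I => \big[Rplus/R0]_J
   ((M * M * ((M - 1) * (M - 1))) * ((muv c p I * muv c p I) * (muv c p J * muv c p J)) +
    (2 * (M * M) * (M - 1)) * (muv c p I * muv c p J * Pmm c p I J) +
    (M * M) * (Pmm c p I J * Pmm c p I J)))); last first.
  move=> I _; apply: eq_bigr => J _; rewrite /Gm !(mu_eq c p_sum) (Pm_eq c p_sum).
  rewrite /muv /Pmm; ring.
by rewrite !dsum_add !dsum_scal dsum_prod.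
Qed.

End Stat.

Lemma arith_prod (M b kk s2 : R) : 0 < M -> 0 < b -> 2 <= kk -> 200 * kk <= M * b ->
  s2 <= 4 * (2 * (kk * kk) + 2) ->
  M * M * s2 <= (M * M * b / 2) * (M * M * b / 2) / 3.
Proof.
move=> HM Hb Hk HY Hs.
have HMM : 0 < M * M by nra.
have Y2 : 40000 * (kk * kk) <= (M * b) * (M * b) by nra.
have : M * M * s2 <= M * M * (4 * (2 * (kk * kk) + 2)) by apply: Rmult_le_compat_l; lra.
have : M * M * (4 * (2 * (kk * kk) + 2)) <= M * M * ((M * b) * (M * b) / 12).
  apply: Rmult_le_compat_l; nra.
have -> : (M * M * b / 2) * (M * M * b / 2) / 3 = M * M * ((M * b) * (M * b) / 12) by field.
lra.
Qed.

Lemma arith_far (M b kk s2 smu n : R) : 1 <= M -> 0 < b -> b <= n -> 2 <= kk -> 200 * kk <= M * b ->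
  s2 <= 4 * (2 * (kk * kk) + 2) -> smu <= 3 * n -> n <= 2 ->
  let L := M * M * n in let tau := M * M * b / 2 in
  ((M * M * ((M - 1) * (M - 1))) * (n * n) + (2 * (M * M) * (M - 1)) * smu + (M * M) * s2)
    - 2 * L * L + L * L <= (L - tau) * (L - tau) / 3.
Proof.
move=> HM Hb Hbn Hk HY Hs Hsm Hn L tau.
have HMM : 0 < M * M by nra.
have HX : 200 * kk <= M * n by nra.
set X := M * n in HX *.
have Hq : (L - tau) * (L - tau) >= M * M * (X * X) / 4.
  have : tau <= L / 2 by rewrite /tau /L; nra.
  have : 0 <= tau by rewrite /tau; nra.
  have -> : M * M * (X * X) / 4 = (L / 2) * (L / 2) by rewrite /L /X; field.
  move=> *; nra.
have E1 : (M * M * ((M - 1) * (M - 1))) * (n * n) - M * M * n * (M * M * n) <= 0.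
  have : (M - 1) * (M - 1) <= M * M by nra.
  have : 0 <= n * n by nra.
  move=> *; have : M * M * ((M - 1) * (M - 1)) * (n * n) <= M * M * (M * M) * (n * n).
    apply: Rmult_le_compat_r => //; apply: Rmult_le_compat_l; lra.
  lra.
have E2 : (2 * (M * M) * (M - 1)) * smu <= 6 * (M * M) * X.
  have h0 : 0 <= 2 * (M * M) * (M - 1) by nra.
  have : (2 * (M * M) * (M - 1)) * smu <= (2 * (M * M) * (M - 1)) * (3 * n) by apply: Rmult_le_compat_l.
  rewrite /X; nra.
have E3 : (M * M) * s2 <= (M * M) * (4 * (2 * (kk * kk) + 2)) by apply: Rmult_le_compat_l; lra.
have Key : 6 * X + 4 * (2 * (kk * kk) + 2) <= X * X / 12.
  have : 400 <= 200 * kk by lra.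
  have : (200 * kk) * (200 * kk) <= X * X.
    apply: Rmult_le_compat; lra.
  move=> h1 h2; nra.
have : (M * M) * (6 * X + 4 * (2 * (kk * kk) + 2)) <= (M * M) * (X * X / 12).
  by apply: Rmult_le_compat_l; lra.
rewrite /L in E1 Hq *; lra.
Qed.

Lemma params (K gamma eps nn M : R) : 2 <= K -> 0 < gamma <= 1 -> 0 < eps <= 1 ->
  nn >= 40000000 * K ^ 3 / (gamma ^ 2 * eps ^ 4) -> nn <= 6 * M + 5 ->
  1 <= M /\ 200 * K <= M * (4 * (eps / 16 * (eps / 16) * (eps / 16 * (eps / 16))) * (gamma * gamma) / (K * K)).
Proof.
move=> HK [Hg0 Hg1] [He0 He1] Hn HM.
set g := gamma ^ 2 * eps ^ 4.
have Hg : 0 < g by apply: Rmult_lt_0_compat; apply: pow_lt.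
have Hg1' : g <= 1.
  rewrite /g -(Rmult_1_l 1); apply: Rmult_le_compat; try (apply: pow_le; lra).
    rewrite -(pow1 2); apply: pow_incr; lra.
  rewrite -(pow1 4); apply: pow_incr; lra.
have K3 : K ^ 3 = K * K * K by ring.
have HK3 : 8 <= K * K * K.
  have : 4 <= K * K by apply: (Rmult_le_compat 2 K 2 K); lra.
  move=> h; have := Rmult_le_compat 4 (K * K) 2 K ltac:(lra) ltac:(lra) h HK; lra.
have Hn2 : 40000000 * (K * K * K) <= nn * g.
  rewrite -K3; apply: (Rmult_le_reg_r (/ g)); first by apply: Rinv_0_lt_compat.
  rewrite (Rmult_assoc nn) Rinv_r; last lra.
  rewrite Rmult_1_r; apply: Rge_le; exact: Hn.
have Hng : nn * g <= nn.
  have : 0 <= nn.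
    apply: Rlt_le; apply: (Rmult_lt_reg_r g) => //; rewrite Rmult_0_l; lra.
  move=> h; have := Rmult_le_compat_l nn g 1 h Hg1'; lra.
have HMg : 3276800 * (K * K * K) <= M * g.
  have : nn * g <= (6 * M + 5) * g by apply: Rmult_le_compat_r; lra.
  have : 5 * g <= 5 by lra.
  have : 320000000 <= nn by lra.
  move=> *.
  have : 0 <= M * g.
    apply: Rmult_le_pos; last lra. lra.
  lra.
split; first lra.
have -> : M * (4 * (eps / 16 * (eps / 16) * (eps / 16 * (eps / 16))) * (gamma * gamma) / (K * K))
     = (M * g) / (16384 * (K * K)) by rewrite /g; field; lra.
have HKK : 0 < 16384 * (K * K) by apply: Rmult_lt_0_compat; [lra| apply: Rmult_lt_0_compat; lra].
apply: (Rmult_le_reg_r (16384 * (K * K))) => //.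
have -> : M * g / (16384 * (K * K)) * (16384 * (K * K)) = M * g by field; lra.
have -> : 200 * K * (16384 * (K * K)) = 3276800 * (K * K * K) by ring.
lra.
Qed.

Lemma card_pd k : INR #|pair_dom k| = INR k * INR k.
Proof. by rewrite card_prod card_ord -multE mult_INR. Qed.

Section Cases.
Variables (k : nat) (c : R).
Hypothesis c_pos : 0 < c.
Variable p : pair_dom k -> R.
Hypothesis p_ge0 : forall x, 0 <= p x.
Hypothesis p_sum : \big[Rplus/R0]_x p x = 1.

Lemma nm_prod : is_product p -> nm c p = 0.
Proof.
move=> [q1 [q2 [[h1 s1] [[h2 s2] Hp]]]].
rewrite /nm big1 // => I _.
have P1 a : p1 p a = q1 a.
  rewrite /p1 (eq_bigr (fun b => q1 a * q2 b)); last by move=> b _; rewrite Hp.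
  by rewrite -big_distrr /= -/(rsum q2) s2 Rmult_1_r.
have P2 b : p2 p b = q2 b.
  rewrite /p2 (eq_bigr (fun a => q2 b * q1 a)); last by move=> a _; rewrite Hp /=; ring.
  by rewrite -big_distrr /= -/(rsum q1) s1 Rmult_1_r.
rewrite /muv /ev /fv P1 P2 Hp; ring.
Qed.

Lemma nm_far gamma : 0 < gamma -> far_from_product gamma p ->
  4 * (c * c * (c * c)) * (gamma * gamma) < nm c p * (INR k * INR k).
Proof.
move=> Hg Hf.
pose q x := p1 p x.1 * p2 p x.2.
have Hq : is_distr q.
  split; first by move=> x; apply: Rmult_le_pos; [exact: p1_ge0|exact: p2_ge0].
  rewrite /rsum sum_pair /q (eq_bigr (fun a => p1 p a * \big[Rplus/R0]_b p2 p b)).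
    by rewrite p2_sum // -big_distrl /= p1_sum // Rmult_1_l.
  by move=> a _; rewrite big_distrr.
have Hqp : is_product q.
  exists (p1 p), (p2 p); split; [split|split; [split|]] => //.
  - exact: p1_ge0.
  - exact: p1_sum.
  - exact: p2_ge0.
  - exact: p2_sum.
have := Hf q Hq Hqp; rewrite /dTV /rsum => H.
have H2 : 2 * gamma < \big[Rplus/R0]_t Rabs (p t - q t) by lra.
have CS := sum_sq_le_card (fun t => Rabs (p t - q t)).
rewrite card_pd in CS.
have E : \big[Rplus/R0]_i (Rabs (p i - q i) * Rabs (p i - q i)) * (c * c * (c * c)) = nm c p.
  rewrite /nm big_distrl /=; apply: eq_bigr => I _.
  rewrite -Rabs_mult Rabs_right; last by apply: Rle_ge; exact: Rle_0_sqr.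
  rewrite /muv /ev /fv /q; case: I => i j /=; ring.
rewrite -E.
have Hc4 : 0 < c * c * (c * c) by apply: Rmult_lt_0_compat; apply: Rmult_lt_0_compat.
have Hg2 : (2 * gamma) * (2 * gamma) < \big[Rplus/R0]_t Rabs (p t - q t) * \big[Rplus/R0]_t Rabs (p t - q t).
  apply: Rmult_le_0_lt_compat; lra.
move: Hg2 CS; move: (\big[Rplus/R0]_t Rabs (p t - q t) * \big[Rplus/R0]_t Rabs (p t - q t)) => a.
move: (\big[Rplus/R0]_i (Rabs (p i - q i) * Rabs (p i - q i))) => b.
move: (c * c * (c * c)) Hc4 => d Hd.
move=> h1 h2.
have : (2 * gamma) * (2 * gamma) * d < INR k * INR k * b * d.
  apply: Rmult_lt_compat_r => //; lra.
nra.
Qed.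

End Cases.

Lemma kap_exp (eps : R) : 0 < eps <= 1 ->
  kap (eps / 16) * kap (eps / 16) * (kap (eps / 16) * kap (eps / 16)) <= exp eps.
Proof.
move=> [He0 He1].
have h1 : kap (eps / 16) <= 1 + eps / 4.
  rewrite /kap; apply: (Rmult_le_reg_r (1 - eps / 16)); first lra.
  rewrite /Rdiv Rmult_assoc Rinv_l; last lra.
  nra.
have h0 : 0 <= kap (eps / 16).
  rewrite /kap; apply: Rmult_le_pos; first lra.
  apply: Rlt_le; apply: Rinv_0_lt_compat; lra.
have h2 : 1 + eps / 4 <= exp (eps / 4).
  apply: Rlt_le; apply: exp_ineq1; lra.
have E : exp eps = exp (eps / 4) * exp (eps / 4) * (exp (eps / 4) * exp (eps / 4)).
  rewrite -!exp_plus; congr exp; field.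
rewrite E.
have h3 : kap (eps / 16) <= exp (eps / 4) by lra.
have h4 : kap (eps / 16) * kap (eps / 16) <= exp (eps / 4) * exp (eps / 4).
  by apply: Rmult_le_compat.
apply: Rmult_le_compat => //; apply: Rmult_le_pos => //.
Qed.


Lemma Wch_LDP k (eps : R) : 0 < eps <= 1 ->
  forall (z : Zt k) (x x' : pair_dom k), Wch (eps / 16) x z <= exp eps * Wch (eps / 16) x' z.
Proof.
move=> He z x x'.
have c_pos : 0 < eps / 16 by lra.
have c_le : eps / 16 <= 1 / 16 by lra.
rewrite /Wch.
have h1 := Rch_LDP c_pos c_le x.1 x'.1 z.1.
have h2 := Rch_LDP c_pos c_le x.2 x'.2 z.2.
have hk := kap_exp He.
have g1 := Rch_ge0 c_pos c_le x.1 z.1; have g2 := Rch_ge0 c_pos c_le x.2 z.2.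
have g3 := Rch_ge0 c_pos c_le x'.1 z.1; have g4 := Rch_ge0 c_pos c_le x'.2 z.2.
have := Rmult_le_compat _ _ _ _ g1 g2 h1 h2.
move: (Rch (eps / 16) x.1 z.1) (Rch (eps / 16) x.2 z.2) (Rch (eps / 16) x'.1 z.1) (Rch (eps / 16) x'.2 z.2) g1 g2 g3 g4 => a b a' b' g1 g2 g3 g4.
move: (kap (eps / 16)) hk => kk hk h.
have g34 : 0 <= a' * b' by apply: Rmult_le_pos.
have : kk * kk * (kk * kk) * (a' * b') <= exp eps * (a' * b') by apply: Rmult_le_compat_r.
have E : kk * kk * a' * (kk * kk * b') = kk * kk * (kk * kk) * (a' * b') by ring.
rewrite E in h; lra.
Qed.

Theorem theorem6p1 :
  exists C : R, C > 0 /\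
  forall (k : nat) (gamma eps : R) (n : nat),
    (2 <= k)%nat ->
    0 < gamma <= 1 ->
    0 < eps <= 1 ->
    INR n >= C * INR k ^ 3 / (gamma ^ 2 * eps ^ 4) ->
    exists (Z : finType) (W : pair_dom k -> Z -> R) (A : {ffun 'I_n -> Z} -> R),
      is_channel W /\ is_LDP eps W /\ (forall z, 0 <= A z <= 1) /\
      forall p : pair_dom k -> R, is_distr p ->
        (is_product p -> prob_indep p W A >= 2 / 3) /\
        (far_from_product gamma p -> 1 - prob_indep p W A >= 2 / 3).
Proof.
exists 40000000; split; first lra.
move=> k gamma eps n Hk Hg He Hn.
have Hkr : 2 <= INR k by have := le_INR 2 k (leP Hk).
have Hn0 : (0 < n)%nat.
  case: n Hn => // Hn; exfalso.
  have HK3 : 0 < INR k ^ 3 by apply: pow_lt; lra.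
  have Hgg : 0 < gamma ^ 2 * eps ^ 4 by apply: Rmult_lt_0_compat; apply: pow_lt; lra.
  have : 0 < 40000000 * INR k ^ 3 / (gamma ^ 2 * eps ^ 4).
    apply: Rmult_lt_0_compat; last by apply: Rinv_0_lt_compat.
    lra.
  have E0 : INR 0 = 0 by []. rewrite E0 in Hn; lra.
case: n Hn0 Hn => [//|N] _ Hn.
set c := eps / 16.
have c_pos : 0 < c by rewrite /c; case: He => *; lra.
have c_le : c <= 1 / 16 by rewrite /c; case: He => *; lra.
set m := (N.+1 %/ 6)%nat.
have Hm : (6 * m <= N.+1)%nat by rewrite mulnC leq_divM.
set M := INR m.
have HM6 : INR N.+1 <= 6 * M + 5.
  have E := divn_eq N.+1 6; have Hr := ltn_pmod N.+1 (isT : (0 < 6)%nat).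
  have H5 : INR (N.+1 %% 6) <= 5.
    have -> : 5 = INR 5 by rewrite /=; ring.
    by apply: le_INR; apply/leP; rewrite -ltnS.
  rewrite {1}E -/m -plusE -multE plus_INR mult_INR /M.
  rewrite (_ : INR 6 = 6); last by rewrite /=; ring.
  lra.
set K := INR k in Hkr *.
set beta := 4 * (c * c * (c * c)) * (gamma * gamma) / (K * K).
have [HMpos HMb] := @params K gamma eps (INR N.+1) M Hkr Hg He Hn HM6.
rewrite -/c -/beta in HMb.
have Hbeta : 0 < beta.
  rewrite /beta; apply: Rmult_lt_0_compat; last by apply: Rinv_0_lt_compat; apply: Rmult_lt_0_compat; lra.
  apply: Rmult_lt_0_compat; last by case: Hg => *; apply: Rmult_lt_0_compat.
  apply: Rmult_lt_0_compat; first lra.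
  by apply: Rmult_lt_0_compat; apply: Rmult_lt_0_compat.
set tau := M * M * beta / 2.
have HMM : 0 < M * M by apply: Rmult_lt_0_compat; lra.
have Htau : 0 < tau by rewrite /tau; apply: Rmult_lt_0_compat; [apply: Rmult_lt_0_compat|]; lra.
exists (Zt k), (Wch c), (Acc (@Sst k c N m) tau).
split.
  split; first by move=> x z; apply: Wch_ge0.
  by move=> x; apply: Wch_sum.
split.
  move=> z x x'; exact: (Wch_LDP He z x x').
split.
  move=> z; rewrite /Acc; destruct (Rle_dec (@Sst k c N m z) tau) as [h|h]; simpl; lra.
move=> p [p_ge0 p_sum].
have Hq0 : forall (j : 'I_N.+1) x, 0 <= @qq k c p N j x by move=> j x; apply: qZ_ge0.
have Hq1 : forall (j : 'I_N.+1), \big[Rplus/R0]_x @qq k c p N j x = 1.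
  move=> j; rewrite /qq; exact: (qZ_sum c p_sum).
have Eprob : prob_indep p (Wch c) (Acc (@Sst k c N m) tau) = EE (@qq k c p N) (Acc (@Sst k c N m) tau)  by [].
rewrite Eprob.
have SP2b := SP2_bound c_pos c_le p_ge0 p_sum; rewrite card_pd -/K in SP2b.
have SPmb := SPmu_bound c_pos c_le p_ge0 p_sum.
have Hnm0 := nm_ge0 c p; have Hnm2 := nm_le2 c_pos c_le p_ge0 p_sum.
set s2 := \big[Rplus/R0]_I \big[Rplus/R0]_J (Pmm c p I J * Pmm c p I J) in SP2b.
set smu := \big[Rplus/R0]_I \big[Rplus/R0]_J (muv c p I * muv c p J * Pmm c p I J) in SPmb.
have ES2e := ES2 c p_sum Hm; rewrite -/s2 -/smu -/M in ES2e.
have ESe := ES c p_sum Hm; rewrite -/M in ESe.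
split.
- move=> Hprod.
  have Hnm := @nm_prod k c p Hprod.
  have Hc := cheb_up Hq0 Hq1 (@Sst k c N m) Htau.
  rewrite ES2e Hnm in Hc.
  rewrite Hnm in SPmb.
  have A1 := @arith_prod M beta K s2 ltac:(lra) Hbeta Hkr HMb SP2b.
  have Hsm : 2 * (M * M) * (M - 1) * smu <= 0.
    have h : 0 <= 2 * (M * M) * (M - 1) by apply: Rmult_le_pos; lra.
    have := Rmult_le_compat_l _ _ _ h SPmb; lra.
  have Htt : 0 < tau * tau by apply: Rmult_lt_0_compat.
  have : (M * M * ((M - 1) * (M - 1)) * (0 * 0) + 2 * (M * M) * (M - 1) * smu + M * M * s2) / (tau * tau) <= 1 / 3.
    apply: (Rmult_le_reg_r (tau * tau)) => //.
    have -> : (M * M * ((M - 1) * (M - 1)) * (0 * 0) + 2 * (M * M) * (M - 1) * smu + M * M * s2) / (tau * tau) * (tau * tau) = 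
       M * M * ((M - 1) * (M - 1)) * (0 * 0) + 2 * (M * M) * (M - 1) * smu + M * M * s2 by field; lra.
    have -> : 1 / 3 * (tau * tau) = tau * tau / 3 by field.
    rewrite /tau; lra.
  move: Hc; set v := (_ / (tau * tau)); move=> Hc Hv.
  move: (EE _ _) Hc => e Hc; lra.
- move=> Hfar.
  have Hnf := nm_far c_pos p_ge0 p_sum (proj1 Hg) Hfar; rewrite -/K in Hnf.
  have HKK : 0 < K * K by apply: Rmult_lt_0_compat; lra.
  have Hbn : beta <= nm c p.
    apply: Rlt_le; rewrite /beta.
    apply: (Rmult_lt_reg_r (K * K)) => //.
    have -> : 4 * (c * c * (c * c)) * (gamma * gamma) / (K * K) * (K * K) = 4 * (c * c * (c * c)) * (gamma * gamma) by field; lra.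
    exact: Hnf.
  set L := M * M * nm c p.
  have HtL : tau < L.
    rewrite /tau /L.
    have := Rmult_le_compat_l _ _ _ (Rlt_le _ _ HMM) Hbn.
    have : 0 < M * M * beta by apply: Rmult_lt_0_compat.
    lra.
  have Hc := cheb_lo Hq0 Hq1 (@Sst k c N m) HtL.
  rewrite ES2e ESe -/L in Hc.
  have A2 := @arith_far M beta K s2 smu (nm c p) HMpos Hbeta Hbn Hkr HMb SP2b SPmb Hnm2.
  rewrite /= -/L -/tau in A2.
  have HLt : 0 < (L - tau) * (L - tau) by apply: Rmult_lt_0_compat; lra.
  have : (M * M * ((M - 1) * (M - 1)) * (nm c p * nm c p) + 2 * (M * M) * (M - 1) * smu + M * M * s2
          - 2 * L * L + L * L) / ((L - tau) * (L - tau)) <= 1 / 3.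
    apply: (Rmult_le_reg_r ((L - tau) * (L - tau))) => //.
    have -> : (M * M * ((M - 1) * (M - 1)) * (nm c p * nm c p) + 2 * (M * M) * (M - 1) * smu + M * M * s2
          - 2 * L * L + L * L) / ((L - tau) * (L - tau)) * ((L - tau) * (L - tau)) =
          (M * M * ((M - 1) * (M - 1)) * (nm c p * nm c p) + 2 * (M * M) * (M - 1) * smu + M * M * s2
          - 2 * L * L + L * L) by field; lra.
    have -> : 1 / 3 * ((L - tau) * (L - tau)) = (L - tau) * (L - tau) / 3 by field.
    exact: A2.
  move: Hc; set v := (_ / ((L - tau) * (L - tau))); move=> Hc Hv.
  move: (EE _ _) Hc => e Hc; lra.
Qed.
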